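(* Let $\preceq_1,\preceq_2,\preceq_3$ be E-relations on $L$ and suppose $\preceq_2$ is not absurd. Then $(\preceq_1*\preceq_2)*\preceq_3=\preceq_1*(\preceq_2*\preceq_3)$.
   Context: $L$ is a propositional language built from a finite set of propositional variables with the connectives $\neg,\wedge,\vee,\rightarrow,\top,\bot$; $W$ is the finite set of propositional worlds. For $\theta\in L$, $S_\theta=\{w\in W\mid w\models\theta\}$; $E\models\phi$ means $\bigcap_{\theta\in E}S_\theta\subseteq S_\phi$, and $\models\phi$ means $\emptyset\models\phi$. E-relation: a relation $\preceq\subseteq L\times L$ such that for all $\theta,\phi,\psi$: (E1) $\theta\preceq\phi$ and $\phi\preceq\psi$ imply $\theta\preceq\psi$; (E2) $\theta\models\phi$ implies $\theta\preceq\phi$; (E3) $\theta\preceq\theta\wedge\phi$ or $\phi\preceq\theta\wedge\phi$; (E4) if $\bot\prec\psi$ for some $\psi$, then $\theta\preceq\phi$ for all $\theta$ implies $\models\phi$. Here $\theta\prec\phi$ iff $\theta\preceq\phi$ and not $\phi\preceq\theta$. An E-relation is absurd iff $\theta\preceq\phi$ for all $\theta,\phi\in L$. Sequences: finite sequences $\vec{\mathcal U}=(\mathcal U_0,\ldots,\mathcal U_k)$ of mutually disjoint subsets of $W$ (components may be empty, possibly repeatedly). $\mathrm{rank}^{\vec{\mathcal U}}(\theta)$ is the least $i$ with $\mathcal U_i\cap S_\theta\neq\emptyset$, $\infty$ if none ($i<\infty$ for all integers $i$). $\theta\mid\!\sim_{\vec{\mathcal U}}\phi$ iff $\mathrm{rank}^{\vec{\mathcal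 U}}(\theta)<\mathrm{rank}^{\vec{\mathcal U}}(\theta\wedge\neg\phi)$ or $\mathrm{rank}^{\vec{\mathcal U}}(\theta)=\infty$. $\vec{\mathcal U}$ is full iff $\bigcup_i\mathcal U_i=W$, empty iff $\bigcup_i\mathcal U_i=\emptyset$; $\Upsilon$ is the set of sequences which are full or empty. For $\vec{\mathcal U}\in\Upsilon$, $\theta\preceq_{\vec{\mathcal U}}\phi$ iff (not $\neg\theta\vee\neg\phi\mid\!\sim_{\vec{\mathcal U}}\theta$) or $\neg\phi\mid\!\sim_{\vec{\mathcal U}}\bot$. Sequence revision: for $\vec{\mathcal U}=(\mathcal U_0,\ldots,\mathcal U_k)$, $\vec{\mathcal V}=(\mathcal V_0,\ldots,\mathcal V_m)$ in $\Upsilon$, if $\vec{\mathcal U}$ is full then $\vec{\mathcal U}*\vec{\mathcal V}=(\mathcal U_0\cap\mathcal V_0,\ldots,\mathcal U_k\cap\mathcal V_0,\ \ldots,\ \mathcal U_0\cap\mathcal V_m,\ldots,\mathcal U_k\cap\mathcal V_m)$; otherwise $\vec{\mathcal U}*\vec{\mathcal V}=\vec{\mathcal V}$. Revision of E-relations: every E-relation equals $\preceq_{\vec{\mathcal U}}$ for some $\vec{\mathcal U}\in\Upsilon$, and for E-relations $\preceq_K,\preceq_E$ one defines $\preceq_K*\preceq_E=\preceq_{\vec{\mathcal U}*\vec{\mathcal V}}$, where $\vec{\mathcal U},\vec{\mathcal V}\in\Upsilon$ are any sequences with $\preceq_K=\preceq_{\vec{\mathcal U}}$ and $\preceq_E=\preceq_{\vec{\mathcal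 V}}$ (the result is independent of this choice and is again an E-relation). *)

(* Defs.v *)
From mathcomp Require Import all_boot.
From Stdlib Require Import ClassicalEpsilon.
Set Implicit Arguments. Unset Strict Implicit. Unset Printing Implicit Defensive.

Inductive form (V : Type) : Type :=
| Var of V
| Neg of form V
| And of form V & form V
| Or of form V & form V
| Imp of form V & form V
| Top
| Bot.
Arguments Top {V}.
Arguments Bot {V}.

Section Defs.
Variable V : finType.

Definition world := {ffun V -> bool}.

Fixpoint sat (w : world) (t : form V) : bool :=
  match t with
  | Var x => w x
  | Neg a => ~~ sat w a
  | And a b => sat w a && sat w b
  | Or a b => sat w a || sat w b
  | Imp a b => sat w a ==> sat w b
  | Top => true
  | Bot => false
  end.

Definition S (t : form V) : {set world} := [set w | sat w t].

Definition entails (t p : form V) : Prop := S t \subset S p.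
Definition valid (p : form V) : Prop := S p = [set: world].

Definition strict (R : form V -> form V -> Prop) t p := R t p /\ ~ R p t.

Definition E_relation (R : form V -> form V -> Prop) : Prop :=
  (forall t p q, R t p -> R p q -> R t q) /\
  (forall t p, entails t p -> R t p) /\
  (forall t p, R t (And t p) \/ R p (And t p)) /\
  ((exists q, strict R Bot q) -> forall p, (forall t, R t p) -> valid p).

Definition absurd (R : form V -> form V -> Prop) : Prop := forall t p, R t p.

Definition wseq := seq {set world}.

Definition mutually_disjoint (U : wseq) : Prop :=
  forall i j, i < j -> j < size U -> [disjoint nth set0 U i & nth set0 U j].

Definition full (U : wseq) : Prop := \bigcup_(A <- U) A = [set: world].
Definition empty_seq (U : wseq) : Prop := \bigcup_(A <- U) A = set0.

Definition Upsilon (U : wseq) : Prop :=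
  mutually_disjoint U /\ (full U \/ empty_seq U).

(* rank^U(theta): least i with U_i meeting S_theta; the value [size U]
   encodes infinity (every finite rank is < size U). *)
Definition rank (U : wseq) (t : form V) : nat :=
  find (fun A : {set world} => [exists w, (w \in A) && (w \in S t)]) U.

Definition is_inf (U : wseq) (n : nat) : bool := n == size U.

Definition nmsim (U : wseq) (t p : form V) : Prop :=
  rank U t < rank U (And t (Neg p)) \/ is_inf U (rank U t).

Definition prec (U : wseq) (t p : form V) : Prop :=
  ~ nmsim U (Or (Neg t) (Neg p)) t \/ nmsim U (Neg p) Bot.

Definition seq_rev (U W' : wseq) : wseq :=
  if [forall w : world, w \in \bigcup_(A <- U) A] then
    flatten [seq [seq A :&: B | A <- U] | B <- W']
  else W'.

Definition represents (R : form V -> form V -> Prop) (U : wseq) : Prop :=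
  Upsilon U /\ forall t p, R t p <-> prec U t p.

Definition rep (R : form V -> form V -> Prop) : wseq :=
  epsilon (inhabits [::]) (represents R).

Definition revE (R1 R2 : form V -> form V -> Prop) : form V -> form V -> Prop :=
  prec (seq_rev (rep R1) (rep R2)).

End Defs.

(* Main.v *)
Require Import Defs.
From mathcomp Require Import all_boot zify.
From Stdlib Require Import ClassicalEpsilon.
Set Implicit Arguments. Unset Strict Implicit. Unset Printing Implicit Defensive.

Section Aux.
Variable V : finType.
Implicit Types (U : seq {set world V}) (t p : form V) (w v : world V).

Definition idx U w := find (fun A : {set world V} => w \in A) U.
Definition fullb U := [forall w, w \in \bigcup_(A <- U) A].

Lemma memU U w : (w \in \bigcup_(A <- U) A) = has (fun A : {set world V} => w \in A) U.
Proof.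
elim: U => [|A U IH]; first by rewrite big_nil inE.
by rewrite big_cons inE IH.
Qed.

Lemma fullbP U : fullb U <-> forall w, idx U w < size U.
Proof.
split=> [/forallP H w | H]; first by rewrite /idx -has_find -memU.
rewrite /fullb; apply/forallP => w; rewrite memU has_find; exact: H w.
Qed.

Lemma rank_eq U a b : (forall w, sat w a = sat w b) -> rank U a = rank U b.
Proof.
move=> H; apply: eq_find => A; apply: eq_existsb => w; by rewrite !inE H.
Qed.

Lemma find_or (T : Type) (a b : pred T) s :
  find (fun x => a x || b x) s = minn (find a s) (find b s).
Proof.
elim: s => [|x s IH] /=; first by rewrite minnn.
case: (a x) => /=; first by rewrite min0n.
case: (b x) => /=; first by rewrite minn0.
by rewrite IH minnSS.
Qed.

Lemma rank_or U a b : rank U (Or a b) = minn (rank U a) (rank U b).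
Proof.
rewrite /rank -find_or; apply: eq_find => A.
apply/existsP/orP.
- by case=> w /andP[wA]; rewrite inE /= => /orP[h|h]; [left|right];
     apply/existsP; exists w; rewrite wA inE.
- by case=> /existsP[w /andP[wA]]; rewrite inE => h; exists w;
     rewrite wA inE /= h ?orbT.
Qed.

Lemma precE U t p : prec U t p <-> rank U (Neg t) <= rank U (Neg p).
Proof.
rewrite /prec /nmsim /is_inf rank_or.
rewrite (@rank_eq U (And (Or (Neg t) (Neg p)) (Neg t)) (Neg t));
  last by move=> w /=; case: (sat w t); case: (sat w p).
rewrite (@rank_eq U (And (Neg p) (Neg Bot)) (Neg p));
  last by move=> w /=; rewrite andbT.
have h1 := find_size [pred A : {set world V} | [exists w, (w \in A) && (w \in S (Neg t))]] U.
have h2 := find_size [pred A : {set world V} | [exists w, (w \in A) && (w \in S (Neg p))]] U.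
rewrite /rank in h1 h2 *.
set a := find _ U in h1 *. set b := find _ U in h2 *.
split.
- case=> [H|[H|/eqP H]]; last by lia.
  + case: (leqP a b) => // ab; exfalso; apply: H; left; lia.
  + lia.
- move=> ab; case: (eqVneq b (size U)) => [->|bn]; first by right; right.
  left; case=> [H|/eqP H]; lia.
Qed.

Lemma rank_le_idx U t w : w \notin S t -> rank U (Neg t) <= idx U w.
Proof.
move=> wt; rewrite /rank /idx.
case: (leqP (find (fun A : {set world V} => w \in A) U) (size U)) => [hs|]; last first.
  by move=> h; have := find_size (fun A : {set world V} => w \in A) U; lia.
case: (ltnP (find (fun A : {set world V} => w \in A) U) (size U)) => hs'; last first.
  have -> : find (fun A : {set world V} => w \in A) U = size U by lia.
  exact: find_size.
case: leqP => // hlt.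
have := before_find set0 hlt.
have : has (fun A : {set world V} => w \in A) U by rewrite has_find.
move=> /(nth_find set0) wn.
move=> /negbT/existsPn/(_ w); rewrite wn !inE /= negbK; by move: wt; rewrite inE => /negbTE ->.
Qed.

Lemma rank_witness U t : rank U (Neg t) < size U ->
  exists2 w, w \notin S t & idx U w <= rank U (Neg t).
Proof.
rewrite /rank -has_find => /[dup] hh /(nth_find set0) /existsP[w /andP[wn]].
rewrite inE /= => wt; exists w; first by rewrite inE.
rewrite /idx; case: leqP => // hlt.
by have := before_find set0 hlt; rewrite wn.
Qed.

Lemma prec_full U t p : fullb U ->
  prec U t p <-> (forall v, v \notin S p -> exists2 w, w \notin S t & idx U w <= idx U v).
Proof.
move=> /fullbP F; rewrite precE; split.
- move=> ab v vp.
  have h1 := rank_le_idx U vp. have h2 := F v.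
  have [w wt hw] := @rank_witness U t ltac:(lia).
  exists w => //; lia.
- move=> H.
  have hs : rank U (Neg p) <= size U by apply: find_size.
  case: (ltnP (rank U (Neg p)) (size U)) => hb; last first.
    have : rank U (Neg t) <= size U by apply: find_size.
    lia.
  have [v vp hv] := rank_witness hb.
  have [w wt hw] := H v vp.
  have := rank_le_idx U wt; lia.
Qed.

Lemma prec_empty U t p : \bigcup_(A <- U) A = set0 -> prec U t p.
Proof.
move=> E; apply/precE.
have hn : forall a, rank U a = size U.
  move=> a; apply/eqP; rewrite eqn_leq find_size /= leqNgt -has_find.
  apply/hasP => -[A AU /existsP[w /andP[wA _]]].
  have : w \in \bigcup_(B <- U) B by rewrite memU; apply/hasP; exists A.
  by rewrite E inE.
by rewrite !hn.
Qed.

End Aux.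

Section Aux2.
Variable V : finType.
Implicit Types (U A B : seq {set world V}) (t p : form V) (w v : world V).

Definition w0 : world V := [ffun _ => true].

Lemma Ups_cases U : Upsilon U -> fullb U \/ \bigcup_(A <- U) A = set0.
Proof.
case=> _ [F|E]; [left|by right].
by apply/forallP => w; rewrite F inE.
Qed.

Lemma full_nonabs U : fullb U -> ~ prec U Top Bot.
Proof.
move=> F /(prec_full _ _ F) /(_ w0).
by rewrite inE /= => /(_ isT) [w]; rewrite inE.
Qed.

Lemma seq_rev_nf A B : ~~ fullb A -> seq_rev A B = B.
Proof. by rewrite /seq_rev /fullb => /negbTE ->. Qed.

Definition flat A B := flatten [seq [seq C :&: D | C <- A] | D <- B].

Lemma seq_rev_f A B : fullb A -> seq_rev A B = flat A B.
Proof. by rewrite /seq_rev /fullb => ->. Qed.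

Lemma size_flat A B : size (flat A B) = size B * size A.
Proof.
elim: B => [|D B IH] //=.
by rewrite /flat /= size_cat size_map -/(flat A B) IH mulSn.
Qed.

Lemma idx_flat A B w : idx A w < size A -> idx B w < size B ->
  idx (flat A B) w = idx B w * size A + idx A w.
Proof.
move=> ha; elim: B => [|D B IH] //=.
rewrite /flat /= -/(flat A B) /idx find_cat /= has_map find_map size_map.
case wD: (w \in D) => /=.
- rewrite (@eq_has _ _ (fun C : {set world V} => w \in C)); last first.
    by move=> C; rewrite /preim /= inE wD andbT.
  rewrite has_find ha mul0n add0n.
  by move=> _; apply: eq_find => C; rewrite /preim /= inE wD andbT.
- rewrite (@eq_has _ _ pred0); last first.
    by move=> C; rewrite /preim /= inE wD andbF.
  rewrite has_pred0 ltnS => hb.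
  by rewrite -/(idx _ w) IH // mulSn addnA.
Qed.

Lemma flat_full A B : fullb A -> fullb B -> fullb (flat A B) /\
  forall w, idx (flat A B) w = idx B w * size A + idx A w.
Proof.
move=> /fullbP FA /fullbP FB.
have I w := idx_flat (FA w) (FB w).
split=> //; apply/fullbP => w; rewrite I size_flat.
have := FA w; have := FB w; nia.
Qed.

Lemma flat_empty A B : \bigcup_(C <- B) C = set0 -> \bigcup_(C <- flat A B) C = set0.
Proof.
move=> E; apply/setP => w; rewrite inE memU.
apply/negP => /hasP [C].
rewrite /flat => /flattenP [s /mapP [D DB ->] /mapP [C' _ ->]].
rewrite inE => /andP [_ wD].
have : w \in \bigcup_(C <- B) C by rewrite memU; apply/hasP; exists D.
by rewrite E inE.
Qed.

Lemma seq_rev_empty A B : \bigcup_(C <- B) C = set0 ->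
  \bigcup_(C <- seq_rev A B) C = set0.
Proof.
move=> E; case F: (fullb A); first by rewrite seq_rev_f // flat_empty.
by rewrite seq_rev_nf ?F.
Qed.

Definition canon (f : world V -> nat) N : seq {set world V} :=
  [seq [set w | f w == i] | i <- iota 0 N].

Lemma canon_ok f N : (forall w, f w < N) ->
  Upsilon (canon f N) /\ fullb (canon f N) /\ forall w, idx (canon f N) w = f w.
Proof.
move=> H.
have I w : idx (canon f N) w = f w.
  rewrite /idx /canon find_map.
  have -> : find (preim (fun i => [set w0 | f w0 == i]) (fun A : {set world V} => w \in A)) (iota 0 N)
      = find (fun i => i == f w) (iota 0 N).
    by apply: eq_find => i; rewrite /preim /= inE eq_sym.
  have G k : forall n m, m <= k < m + n -> find (fun i => i == k) (iota m n) = k - m.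
    elim=> [|n IH] m; first by lia.
    move=> hk /=; case: eqVneq => [->|ne]; first by rewrite subnn.
    rewrite IH; first by lia.
    by move: ne hk; case: eqVneq => //; lia.
  by rewrite G ?subn0 //; have := H w; lia.
have F : fullb (canon f N).
  by apply/fullbP => w; rewrite I /canon size_map size_iota.
split; last by [].
split.
- move=> i j ij; rewrite /canon size_map size_iota => jN.
  rewrite -setI_eq0 (nth_map 0) ?size_iota; last by lia.
  rewrite (nth_map 0) ?size_iota // !nth_iota //; last by lia.
  apply/eqP/setP => w; rewrite !inE.
  by case: (eqVneq (f w) (0 + i)) => [->|]; [rewrite eqn_leq; lia|].
- left; apply/setP => w; rewrite inE.
  by move/forallP: F => ->.
Qed.

Lemma nil_ok : Upsilon ([::] : seq {set world V}) /\ forall t p, prec [::] t p.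
Proof.
split; last by move=> t p; apply: prec_empty; rewrite big_nil.
split; first by move=> i j _.
by right; rewrite /empty_seq big_nil.
Qed.

End Aux2.

Section Rep.
Variable V : finType.
Implicit Types (U A B : seq {set world V}) (t p a b c : form V) (w v : world V).

Definition chi w : form V :=
  foldr (fun x acc => And (if w x then Var x else Neg (Var x)) acc) Top (enum V).
Definition nw w : form V := Neg (chi w).
Definition cl (ws : seq (world V)) : form V := foldr (fun w acc => And (nw w) acc) Top ws.

Lemma sat_chi v w : sat v (chi w) = (v == w).
Proof.
rewrite /chi.
have E : forall s : seq V, sat v (foldr (fun x acc => And (if w x then Var x else Neg (Var x)) acc) Top s)
   = all (fun x => v x == w x) s.
  elim=> [|x s IH] //=; rewrite IH; by case: (w x) => /=; case: (v x).
rewrite E; apply/allP/eqP => [H|-> //]; apply/ffunP => x.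
by apply/eqP; apply: H; rewrite mem_enum.
Qed.

Lemma sat_nw v w : sat v (nw w) = (v != w).
Proof. by rewrite /= sat_chi. Qed.

Lemma sat_cl v ws : sat v (cl ws) = (v \notin ws).
Proof.
elim: ws => [|w ws IH] //=; by rewrite sat_chi IH in_cons negb_or.
Qed.

Definition asb (P : Prop) : bool := if excluded_middle_informative P then true else false.
Lemma asbP (P : Prop) : asb P <-> P.
Proof. by rewrite /asb; case: excluded_middle_informative. Qed.

Variable R : form V -> form V -> Prop.
Hypothesis HR : E_relation R.

Lemma Rtr a b c : R a b -> R b c -> R a c.
Proof. by case: HR => H _; apply: H. Qed.
Lemma Rmono a b : (forall w, sat w a -> sat w b) -> R a b.
Proof.
case: HR => _ [H _] Hs; apply: H; apply/subsetP => w; rewrite !inE; exact: Hs.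
Qed.
Lemma Rrefl a : R a a.
Proof. exact: Rmono. Qed.
Lemma Rconj a b : R a (And a b) \/ R b (And a b).
Proof. by case: HR => _ [_ [H _]]. Qed.
Lemma Rtot a b : R a b \/ R b a.
Proof.
case: (Rconj a b) => H; [left|right]; apply: Rtr H _; apply: Rmono => w /= /andP[] //.
Qed.
Lemma RandL a b c : R (And a b) c <-> R a c \/ R b c.
Proof.
split.
- by case: (Rconj a b) => H1 H2; [left|right]; apply: Rtr H1 H2.
- by case=> H; apply: Rtr H; apply: Rmono => w /= /andP[].
Qed.
Lemma RandR a b c : R c (And a b) <-> R c a /\ R c b.
Proof.
split.
- by move=> H; split; apply: Rtr H _; apply: Rmono => w /= /andP[].
- case=> H1 H2; case: (Rconj a b) => H; [apply: Rtr H1 H | apply: Rtr H2 H].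
Qed.

Hypothesis HA : ~ absurd R.

Lemma Rtop_false q : (exists w, ~~ sat w q) -> ~ R Top q.
Proof.
case=> w wq RT.
have nTB : ~ R Top Bot.
  move=> h; apply: HA => x y; apply: Rtr (Rtr _ h) _; exact: Rmono.
case: HR => _ [_ [_ H4]].
have : valid q.
  apply: H4; first by exists Top; split => //; apply: Rmono.
  by move=> x; apply: Rtr RT; apply: Rmono.
by move/setP/(_ w); rewrite !inE (negbTE wq).
Qed.

Lemma RclL ws c : R (cl ws) c <-> (exists2 w, w \in ws & R (nw w) c) \/ R Top c.
Proof.
elim: ws => [|w ws IH] /=; first by split; [right|case=> // -[]].
rewrite RandL IH; split.
- case=> [H|[[w' w'ws H]|H]]; [left; exists w|left; exists w'|right] => //.
  + by rewrite mem_head.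
  + by rewrite in_cons w'ws orbT.
- case=> [[w' ]|H]; last by right; right.
  rewrite in_cons => /orP[/eqP -> H|w'ws H]; first by left.
  by right; left; exists w'.
Qed.

Lemma RclR ws c : R c (cl ws) <-> forall w, w \in ws -> R c (nw w).
Proof.
elim: ws => [|w ws IH] /=.
  by split => // _; apply: Rmono.
rewrite RandR IH; split.
- by case=> H1 H2 w'; rewrite in_cons => /orP[/eqP ->|]; [|apply: H2].
- by move=> H; split; [apply: H; rewrite mem_head | move=> w' h; apply: H; rewrite in_cons h orbT].
Qed.

Lemma R_char t p : R t p <-> forall v, v \notin S p -> exists2 w, w \notin S t & R (nw w) (nw v).
Proof.
set ts := enum (~: S t). set ps := enum (~: S p).
have Et : forall w, sat w t = sat w (cl ts).
  by move=> w; rewrite sat_cl mem_enum !inE negbK.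
have Ep : forall w, sat w p = sat w (cl ps).
  by move=> w; rewrite sat_cl mem_enum !inE negbK.
have -> : R t p <-> R (cl ts) (cl ps).
  split=> H.
  - by apply: Rtr (Rtr _ H) _; apply: Rmono => w; rewrite ?Et ?Ep.
  - by apply: Rtr (Rtr _ H) _; apply: Rmono => w; rewrite ?Et ?Ep.
rewrite RclR; split.
- move=> H v vp.
  have : v \in ps by rewrite mem_enum inE.
  move/H/RclL => [[w wts Hw]|HT]; last first.
    by exfalso; apply: (Rtop_false _ HT); exists v; rewrite sat_nw eqxx.
  by exists w => //; move: wts; rewrite mem_enum inE.
- move=> H v; rewrite mem_enum inE => /H [w wt Hw].
  by apply/RclL; left; exists w => //; rewrite mem_enum inE.
Qed.

Definition fR w := #|[set u | asb (~ R (nw w) (nw u))]|.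

Lemma fR_le w v : fR w <= fR v <-> R (nw w) (nw v).
Proof.
split.
- move=> le; apply: NNPP => nR.
  have sub : [set u | asb (~ R (nw v) (nw u))] \proper [set u | asb (~ R (nw w) (nw u))].
    apply/properP; split.
    + apply/subsetP => u; rewrite !inE => /asbP nvu; apply/asbP => wu.
      apply: nvu; case: (Rtot (nw w) (nw v)) => // vw.
      by apply: Rtr vw wu.
    + exists v; rewrite !inE; first by apply/asbP.
      by apply/negP => /asbP; apply; apply: Rrefl.
  by move: le; rewrite /fR leqNgt (proper_card sub).
- move=> H; apply: subset_leq_card; apply/subsetP => u; rewrite !inE => /asbP nwu.
  by apply/asbP => vu; apply: nwu; apply: Rtr H vu.
Qed.

End Rep.

Lemma rep_exists (V : finType) (R : form V -> form V -> Prop) :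
  E_relation R -> exists U, represents R U.
Proof.
move=> HR.
case: (classic (absurd R)) => HA.
  exists [::]; have [H1 H2] := nil_ok V; split => // t p; split => // _; exact: HA.
have hf : forall w, fR R w < #|world V|.+1 by move=> w; rewrite ltnS max_card.
have [Up [F I]] := canon_ok hf.
exists (canon (fR R) #|world V|.+1); split => // t p.
rewrite (prec_full _ _ F) (R_char HR HA); split.
- move=> H v /H [w wt Hw]; exists w => //; rewrite !I; apply/(fR_le HR); exact: Hw.
- move=> H v /H [w wt Hw]; exists w => //; move: Hw; rewrite !I; move/(fR_le HR); exact.
Qed.

Lemma rep_spec (V : finType) (R : form V -> form V -> Prop) :
  (exists U, represents R U) -> represents R (rep R).
Proof. move=> H; exact: epsilon_spec. Qed.

Section Main.
Variable V : finType.
Implicit Types (U A B X Y : seq {set world V}) (t p : form V) (w v : world V).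

Definition ple U w v := idx U w <= idx U v.
Definition lexR (P Q : world V -> world V -> bool) w v :=
  (P w v && ~~ P v w) || (P w v && P v w && Q w v).

Lemma lexR_assoc P1 P2 P3 w v :
  lexR P3 (lexR P2 P1) w v = lexR (lexR P3 P2) P1 w v.
Proof.
rewrite /lexR.
by case: (P3 w v); case: (P3 v w); case: (P2 w v); case: (P2 v w);
   case: (P1 w v); case: (P1 v w).
Qed.

Lemma ple_flat A B : fullb A -> fullb B ->
  fullb (flat A B) /\ forall w v, ple (flat A B) w v = lexR (ple B) (ple A) w v.
Proof.
move=> FA FB; have [F I] := flat_full FA FB; split => // w v.
have := (proj1 (fullbP A) FA w); have := (proj1 (fullbP A) FA v).
rewrite /ple /lexR !I -!ltnNge.
set a1 := idx A w; set a2 := idx A v; set b1 := idx B w; set b2 := idx B v.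
move=> h2 h1.
case: (ltngtP b1 b2) => hb /=.
- by apply/idP; nia.
- by apply/negbTE; rewrite -ltnNge; nia.
- rewrite hb; apply/idP/idP => h; nia.
Qed.

Lemma ple_prec U w v : fullb U -> (ple U w v <-> prec U (nw w) (nw v)).
Proof.
move=> F; rewrite (prec_full _ _ F) /ple; split.
- move=> H v'; rewrite inE sat_nw negbK => /eqP ->.
  by exists w => //; rewrite inE sat_nw negbK.
- case/(_ v); first by rewrite inE sat_nw negbK.
  by move=> w'; rewrite inE sat_nw negbK => /eqP ->.
Qed.

Lemma prec_ext U U' : fullb U -> fullb U' -> (forall w v, ple U w v = ple U' w v) ->
  forall t p, prec U t p <-> prec U' t p.
Proof.
move=> F F' E t p; rewrite (prec_full _ _ F) (prec_full _ _ F').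
split=> H v /H [w wt Hw]; exists w => //; move: Hw; have := E w v; rewrite /ple => ->.
- by [].
- by move=> ->.
Qed.

Lemma nonabs_full U : Upsilon U -> ~ (forall t p, prec U t p) -> fullb U.
Proof.
move=> /Ups_cases [] // E H; exfalso; apply: H => t p; exact: prec_empty.
Qed.

Lemma rep_full X : fullb X ->
  fullb (rep (prec X)) /\ forall w v, ple (rep (prec X)) w v = ple X w v.
Proof.
move=> F.
have hf : forall w, idx X w < size X by apply/fullbP.
have [Up [Fc Ic]] := canon_ok hf.
have [UY HY] : represents (prec X) (rep (prec X)).
  apply: rep_spec; exists (canon (idx X) (size X)); split => // t p.
  apply: prec_ext => // w v; by rewrite /ple !Ic.
have FY : fullb (rep (prec X)).
  apply: nonabs_full => // H; apply: (full_nonabs F); apply/HY; exact: H.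
split => // w v; apply/idP/idP.
- by move/(ple_prec _ _ FY)/HY/(ple_prec _ _ F).
- by move/(ple_prec _ _ F)/HY/(ple_prec _ _ FY).
Qed.

Lemma rep_empty X : \bigcup_(C <- X) C = set0 ->
  \bigcup_(C <- rep (prec X)) C = set0.
Proof.
move=> E.
have [UY HY] : represents (prec X) (rep (prec X)).
  apply: rep_spec; exists [::]; have [H1 H2] := nil_ok V; split => // t p.
  by split => _; [apply: H2 | apply: prec_empty].
case: (Ups_cases UY) => // FY; exfalso.
by apply: (full_nonabs FY); apply/HY; apply: prec_empty.
Qed.

End Main.

Theorem proposition7 (V : finType) (R1 R2 R3 : form V -> form V -> Prop) :
  E_relation R1 -> E_relation R2 -> E_relation R3 -> ~ absurd R2 ->
  forall t p : form V,
    revE (revE R1 R2) R3 t p <-> revE R1 (revE R2 R3) t p.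
Proof.
move=> H1 H2 H3 HA t p.
have [U1p HU1] := rep_spec (rep_exists H1).
have [U2p HU2] := rep_spec (rep_exists H2).
have [U3p HU3] := rep_spec (rep_exists H3).
rewrite /revE.
set U1 := rep R1 in U1p HU1 *.
set U2 := rep R2 in U2p HU2 *.
set U3 := rep R3 in U3p HU3 *.
have F2 : fullb U2.
  apply: nonabs_full => // H; apply: HA => a b; apply/HU2; exact: H.
set X := seq_rev U1 U2.
have [FX PX] : fullb X /\ forall w v, ple X w v =
    if fullb U1 then lexR (ple U2) (ple U1) w v else ple U2 w v.
  rewrite /X; case F1: (fullb U1).
  - by rewrite seq_rev_f //; apply: ple_flat.
  - by rewrite seq_rev_nf ?F1.
have [FY PY] := rep_full FX.
set Y := rep (prec X) in FY PY *.
set Z := seq_rev U2 U3.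
have EZ : Z = flat U2 U3 by rewrite /Z seq_rev_f.
case: (Ups_cases U3p) => [F3|E3]; last first.
  have EZ' : \bigcup_(C <- Z) C = set0 by rewrite EZ flat_empty.
  have EZr := rep_empty EZ'.
  split=> _; apply: prec_empty; apply: seq_rev_empty => //.
have [FZ PZ] := ple_flat F2 F3.
rewrite -EZ in FZ PZ.
have [FZr PZr] := rep_full FZ.
set Zr := rep (prec Z) in FZr PZr *.
have [FL PL] := ple_flat FY F3.
rewrite seq_rev_f //.
case F1: (fullb U1).
- have [FR PR] := ple_flat (idP F1) FZr.
  rewrite seq_rev_f //.
  apply: prec_ext => // w v.
  rewrite PL PR /lexR !PY !PX F1 !PZr !PZ /lexR.
  by case: (ple U1 w v); case: (ple U1 v w); case: (ple U2 w v); case: (ple U2 v w);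
     case: (ple U3 w v); case: (ple U3 v w).
- rewrite seq_rev_nf ?F1 //.
  apply: prec_ext => // w v.
  by rewrite PL !PZr PZ /lexR !PY !PX F1.
Qed.
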